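(* Let $n\ge 3$ and let $A$ be the matrix obtained from $V_n$ by replacing the entries $a_{ij}$ for a nonempty set of positions $(i,j)$ with $2\le i\le j\le n-1$ by $t$. Viewing $\det A$ as a polynomial in the indeterminates $s$ and $t$, the coefficient of the monomial $s^{n-3}t^3$ in $\det A$ is nonzero.
   Context: $V_n$ is the $n\times n$ matrix $(a_{ij})$ with: $a_{1j}=t$ for $1\le j\le n-1$ and $a_{1n}=0$; $a_{i+1,i}=s$ for $1\le i\le n-1$; $a_{ij}=0$ for $i>j+1$; $a_{ij}=0$ for $2\le i\le j\le n-1$; and $a_{in}=t$ for $2\le i\le n$. Every entry of $V_n$ and of $A$ is $0$, $s$ or $t$, so $\det A$ is a polynomial in $s,t$ with integer coefficients. *)

(* Defs.v *)
From mathcomp Require Import all_boot all_order all_algebra.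
Set Implicit Arguments. Unset Strict Implicit. Unset Printing Implicit Defensive.
Import GRing.Theory.
Local Open Scope ring_scope.

(* Indices are 0-based: paper's (i,j) corresponds to ('I_n) (i-1, j-1). *)
Definition Vmx (R : pzRingType) (n : nat) (s t : R) : 'M[R]_n :=
  \matrix_(i < n, j < n)
    if (i == 0%N :> nat) then (if (j < n.-1)%N then t else 0)
    else if (j == n.-1 :> nat) then t
    else if (i == j.+1 :> nat) then s
    else 0.

Definition Amx (R : pzRingType) (n : nat) (s t : R) (S : {set 'I_n * 'I_n})
  : 'M[R]_n :=
  \matrix_(i < n, j < n) if (i, j) \in S then t else @Vmx R n s t i j.

(* Bivariate integer polynomials: {poly {poly int}}; the outer variable is t,
   the inner variable is s. *)
Definition var_s : {poly {poly int}} := ('X)%:P.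
Definition var_t : {poly {poly int}} := 'X.

(* Main.v *)
Require Import Defs.
From mathcomp Require Import all_boot all_order all_algebra all_fingroup.
Set Implicit Arguments. Unset Strict Implicit. Unset Printing Implicit Defensive.
Import GRing.Theory Num.Theory.
Local Open Scope ring_scope.
Lemma st_neq : var_s != var_t.
Proof. apply/eqP => /(congr1 (fun p : {poly {poly int}} => p`_1)).
rewrite /var_s /var_t coefC coefX /=. move/eqP. by rewrite eq_sym oner_eq0. Qed.
Lemma s_neq0 : var_s != 0.
Proof. by rewrite /var_s polyC_eq0 polyX_eq0. Qed.
Lemma t_neq0 : var_t != 0.
Proof. by rewrite /var_t polyX_eq0. Qed.

Lemma prod_coef (n : nat) (F : 'I_n -> {poly {poly int}}) : (3 <= n)%N ->
  (forall i, [\/ F i = 0, F i = var_s | F i = var_t]) ->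
  (\prod_i F i)`_3`_(n-3) = ([forall i, F i != 0] && (#|[pred i | F i == var_t]| == 3%N))%:R.
Proof.
move=> n3 HF; case: (boolP [forall i, F i != 0]) => H /=; last first.
  move/forallPn: H => [i /negPn/eqP Fi0].
  by rewrite (bigD1 i) //= Fi0 mul0r coef0 coef0.
rewrite (bigID (fun i => F i == var_t)) /=.
rewrite (eq_bigr (P := fun i => F i == var_t) (fun _ => var_t)); last by move=> i /eqP.
rewrite (eq_bigr (P := fun i => F i != var_t) (fun _ => var_s)); last first.
  move=> i; move: (forallP H i); case: (HF i) => ->; by rewrite ?eqxx.
rewrite !prodr_const /var_s /var_t -rmorphXn coefMC coefXn.
have Hc : #|[pred i | F i == var_t]| + #|[pred i | F i != var_t]| = n.
  by have := cardC [pred i | F i == var_t]; rewrite card_ord.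
move: Hc; rewrite /var_t.
set k := #|_|; set m := #|_|.
move=> Hc; rewrite mulr_natl coefMn coefXn.
case: eqP => Hk /=; first by rewrite eq_sym.
rewrite mul0rn; case: eqP => // Hk3; exfalso; apply: Hk.
by rewrite -Hc Hk3 addKn.
Qed.
From mathcomp Require Import zify.

Lemma ordS_val n (j : 'I_n) : nat_of_ord (ordS j) = if j.+1 == n then 0%N else j.+1.
Proof.
rewrite /=; case: eqP => [->|h]; first by rewrite modnn.
rewrite modn_small //; have := ltn_ord j; lia.
Qed.

Lemma Aentry n S (s t : {poly {poly int}}) (i j : 'I_n) :
  @Amx _ n s t S i j = if (i, j) \in S then t else if nat_of_ord i == 0%N then
    (if (j < n.-1)%N then t else 0) else if nat_of_ord j == n.-1 then t
    else if nat_of_ord i == j.+1 then s else 0.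
Proof. by rewrite !mxE. Qed.

Lemma A_cases n S (i j : 'I_n) :
  [\/ @Amx _ n var_s var_t S i j = 0, @Amx _ n var_s var_t S i j = var_s
    | @Amx _ n var_s var_t S i j = var_t].
Proof.
rewrite Aentry; do ![case: ifP => _]; by [apply: Or31 | apply: Or32 | apply: Or33].
Qed.

Definition goodS n (S : {set 'I_n * 'I_n}) :=
  forall p, p \in S -> [/\ (1 <= p.1)%N, (p.1 <= p.2)%N & (p.2 <= n - 2)%N].

Lemma A_s n S (HS : goodS S) (i j : 'I_n) : @Amx _ n var_s var_t S i j != 0 ->
  (@Amx _ n var_s var_t S i j == var_s) = (ordS j == i).
Proof.
rewrite Aentry -val_eqE /= => nz.
have oS := ordS_val j; have Hj := ltn_ord j; have Hi := ltn_ord i.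
have ts : (var_t == var_s) = false by rewrite eq_sym (negbTE st_neq).
have HSij : (i, j) \in S -> [/\ (1 <= i)%N, (i <= j)%N & (j <= n - 2)%N] by move/HS.
move: oS HSij nz.
case: ((i, j) \in S); case E1: (j.+1 == n); case E2: (nat_of_ord i == 0%N);
case E3: (j < n.-1)%N; case E4: (nat_of_ord j == n.-1); case E5: (nat_of_ord i == j.+1);
move=> /= oS HSij; rewrite ?eqxx ?ts // => _; 
first [ apply/esym/negbTE | apply/esym ]; rewrite -val_eqE /= ?oS; apply/eqP;
first [move/eqP: E1 => E1 | move/negbT/eqP: E1 => E1];
first [move/eqP: E2 => E2 | move/negbT/eqP: E2 => E2];
first [move/idP: E3 => E3 | move/negbT: E3 => E3];
first [move/eqP: E4 => E4 | move/negbT/eqP: E4 => E4];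
first [move/eqP: E5 => E5 | move/negbT/eqP: E5 => E5];
first [have := HSij isT; case | idtac]; lia.
Qed.

Ltac crunch n i j S HS :=
  let oS := fresh "oS" in let HSij := fresh "HSij" in
  have oS := ordS_val j; have := ltn_ord j; have := ltn_ord i;
  have HSij := HS (i, j);
  move: oS HSij;
  let E0 := fresh "E" in let E1 := fresh "E" in let E2 := fresh "E" in
  let E3 := fresh "E" in let E4 := fresh "E" in let E5 := fresh "E" in
  case E0 : ((i, j) \in S); case E1: (j.+1 == n); case E2: (nat_of_ord i == 0%N);
  case E3: (j < n.-1)%N; case E4: (nat_of_ord j == n.-1); case E5: (nat_of_ord i == j.+1);
  move=> /= oS HSij; rewrite ?oS;
  first [move/eqP: E1 => E1 | move/negbT/eqP: E1 => E1];
  first [move/eqP: E2 => E2 | move/negbT/eqP: E2 => E2];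
  first [move/idP: E3 => E3 | move/negbT: E3 => E3];
  first [move/eqP: E4 => E4 | move/negbT/eqP: E4 => E4];
  first [move/eqP: E5 => E5 | move/negbT/eqP: E5 => E5];
  first [have := HSij isT; case | idtac].

Lemma ts_false : (var_t == var_s) = false.
Proof. by rewrite eq_sym (negbTE st_neq). Qed.
Lemma st_false : (var_s == var_t) = false.
Proof. by rewrite (negbTE st_neq). Qed.
Lemma t0_false : (0 == var_t) = false.
Proof. by rewrite eq_sym (negbTE t_neq0). Qed.
Lemma s0_false : (0 == var_s) = false.
Proof. by rewrite eq_sym (negbTE s_neq0). Qed.

Lemma A_t n S (HS : goodS S) (i j : 'I_n) : @Amx _ n var_s var_t S i j == var_t ->
  nat_of_ord i != 0%N -> (nat_of_ord (ordS j) == 0%N) || (i < ordS j)%N.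
Proof.
rewrite Aentry /=.
crunch n i j S HS; rewrite ?eqxx ?ts_false ?st_false ?t0_false ?s0_false //; lia.
Qed.

Lemma A_row0 n S (HS : goodS S) (i j : 'I_n) : nat_of_ord i = 0%N ->
  @Amx _ n var_s var_t S i j != var_s.
Proof.
rewrite Aentry /=.
crunch n i j S HS; rewrite ?eqxx ?ts_false ?st_false ?t0_false ?s0_false //; lia.
Qed.

Lemma A_nz n S (HS : goodS S) (i j : 'I_n) :
  [|| (nat_of_ord (ordS j) == i) && (nat_of_ord i != 0%N),
      (nat_of_ord i == 0%N) && (nat_of_ord (ordS j) != 0%N),
      (nat_of_ord i != 0%N) && (nat_of_ord (ordS j) == 0%N) | (i, j) \in S] ->
  @Amx _ n var_s var_t S i j != 0.
Proof.
rewrite Aentry /=.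
crunch n i j S HS; rewrite ?eqxx ?ts_false ?st_false ?t0_false ?s0_false ?t_neq0 ?s_neq0 //; lia.
Qed.

Lemma three_cycle_even n (p : {perm 'I_n}) (z r1 r2 : 'I_n) :
  nat_of_ord z = 0%N -> (0 < r1)%N -> (r1 < r2)%N ->
  (forall i, (p i != i) = (i \in [set z; r1; r2])) ->
  (nat_of_ord (p r2) == 0%N) || (r2 < p r2)%N ->
  odd_perm p = false.
Proof.
move=> Hz H1 H12 HT Hr2.
have zr1 : z != r1 by apply/eqP => /(congr1 (@nat_of_ord n)); lia.
have zr2 : z != r2 by apply/eqP => /(congr1 (@nat_of_ord n)); lia.
have r12 : r1 != r2 by apply/eqP => /(congr1 (@nat_of_ord n)); lia.
have Tc : forall i, i \in [set z; r1; r2] -> p i \in [set z; r1; r2].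
  move=> i Ti; rewrite -HT; apply/eqP => h; move: (perm_inj h) => e.
  by move: Ti; rewrite -HT e eqxx.
have fix_r : forall i, i \in [set z; r1; r2] -> p i != i by move=> i; rewrite HT.
have Tz : z \in [set z; r1; r2] by rewrite !inE eqxx.
have T1 : r1 \in [set z; r1; r2] by rewrite !inE eqxx orbT.
have T2 : r2 \in [set z; r1; r2] by rewrite !inE eqxx !orbT.
have P2 : p r2 = z.
  move: (Tc _ T2) (fix_r _ T2) Hr2; rewrite !inE.
  case/orP => [/orP [] | ] /eqP E //; rewrite E; last by rewrite eqxx.
  move=> _ /orP []; lia.
have P1 : p r1 = r2.
  move: (Tc _ T1) (fix_r _ T1); rewrite !inE.
  case/orP => [/orP [] | ] /eqP E //; last by rewrite E eqxx.
  by move: E; rewrite -P2 => /perm_inj /eqP; rewrite (negbTE r12).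
have P0 : p z = r1.
  move: (Tc _ Tz) (fix_r _ Tz); rewrite !inE.
  case/orP => [/orP [] | ] /eqP E //; first by rewrite E eqxx.
  by move: E; rewrite -P1 => /perm_inj /eqP; rewrite (negbTE zr1).
have -> : p = (tperm z r1 * tperm z r2)%g.
  apply/permP => x; rewrite permM.
  case: (boolP (x \in [set z; r1; r2])) => Tx.
    move: Tx; rewrite !inE => /orP [/orP [] | ] /eqP ->.
    - by rewrite P0 tpermL tpermD // eq_sym.
    - by rewrite P1 (tpermR z r1) tpermL.
    - by rewrite P2 (tpermD zr2 r12) tpermR.
  move: (Tx); rewrite -HT negbK => /eqP ->.
  move: (Tx); rewrite !inE negb_or => /andP [/norP [xz xr1] xr2].
  rewrite eq_sym in xz; rewrite eq_sym in xr1; rewrite eq_sym in xr2.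
  by rewrite (tpermD xz xr1) (tpermD xz xr2).
by rewrite odd_permM !odd_tperm zr1 zr2.
Qed.

Definition cS n : {perm 'I_n} := perm (@ordS_inj n).
Lemma cSE n (x : 'I_n) : cS n x = ordS x.
Proof. by rewrite permE. Qed.

Lemma keyT n S (HS : goodS S) (s : {perm 'I_n}) (i : 'I_n) :
  @Amx _ n var_s var_t S i (s i) != 0 ->
  (@Amx _ n var_s var_t S i (s i) == var_t) = ((s * cS n)%g i != i).
Proof.
move=> nz; rewrite permM cSE -(A_s HS nz).
by case: (A_cases S i (s i)) nz => -> //; rewrite ?eqxx ?ts_false ?st_false.
Qed.

Definition goodP n S (s : {perm 'I_n}) :=
  [forall i, @Amx _ n var_s var_t S i (s i) != 0] &&
  (#|[pred i | @Amx _ n var_s var_t S i (s i) == var_t]| == 3%N).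

Lemma good_sign n S (HS : goodS S) (s : {perm 'I_n}) : (3 <= n)%N ->
  goodP S s -> odd_perm s = odd_perm (cS n).
Proof.
move=> n3 /andP [/forallP nz /eqP c3].
set p := (s * cS n)%g.
suff : odd_perm p = false.
  by rewrite odd_permM; case: (odd_perm s); case: (odd_perm (cS n)).
have n0 : (0 < n)%N by lia.
pose z := Ordinal n0.
pose T := [set i | p i != i].
have HTi : forall i, (i \in T) = (p i != i) by move=> i; rewrite inE.
have cT : #|T| = 3%N.
  by rewrite -c3; apply: eq_card => i; rewrite HTi inE /= (keyT HS (nz i)).
have Tz : z \in T.
  rewrite HTi -(keyT HS (nz z)).
  by case: (A_cases S z (s z)) (nz z) (@A_row0 n S HS z (s z) erefl) => ->; rewrite ?eqxx.
have c2 : #|T :\ z| == 2%N.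
  by move: cT; rewrite (cardsD1 z) Tz add1n => -[->].
case/cards2P: c2 => x [y [xy Exy]].
have memT : forall i, (p i != i) = (i \in [set z; x; y]).
  move=> i; rewrite -HTi; case: (eqVneq i z) => [->|iz]; first by rewrite Tz !inE eqxx.
  have <- : (i \in T :\ z) = (i \in T) by rewrite in_setD1 iz.
  by rewrite Exy !inE (negbTE iz).
have xz : x != z.
  have : x \in T :\ z by rewrite Exy !inE eqxx.
  by rewrite in_setD1 => /andP [].
have yz : y != z.
  have : y \in T :\ z by rewrite Exy !inE eqxx orbT.
  by rewrite in_setD1 => /andP [].
have fin : forall r1 r2 : 'I_n, r1 != z -> r2 != z -> (r1 < r2)%N ->
    (forall i, (p i != i) = (i \in [set z; r1; r2])) -> odd_perm p = false.
  move=> r1 r2 r1z r2z r12 HT.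
  apply: (three_cycle_even (z := z) (r1 := r1) (r2 := r2)) => //.
  - by move: r1z; rewrite -val_eqE /=; lia.
  - have r2T : (s * cS n)%g r2 != r2 by rewrite HT !inE eqxx !orbT.
    have := @A_t n S HS r2 (s r2).
    by rewrite (keyT HS (nz r2)) r2T permM cSE; apply.
case: (ltngtP x y) => [lxy|lyx|exy].
- exact: (fin x y xz yz lxy memT).
- apply: (fin y x yz xz lyx) => i; rewrite memT !inE.
  by case: (i == z); case: (i == x); case: (i == y).
- by move: xy; rewrite -val_eqE /= exy eqxx.
Qed.

Lemma exists_good n S (HS : goodS S) : (3 <= n)%N -> S != set0 ->
  exists s : {perm 'I_n}, goodP S s.
Proof.
move=> n3 /set0Pn [[a b] Hab].
have [i0 [j0 Hin]] : exists i0 j0 : 'I_n, (i0, j0) \in S by exists a, b.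
case: (HS _ Hin) => /= h1 h2 h3.
have n0 : (0 < n)%N by lia.
pose z := Ordinal n0.
pose r2 := ordS j0.
have r2v : nat_of_ord r2 = j0.+1.
  rewrite /r2 ordS_val; case: eqP => //; lia.
have zr1 : z != i0 by apply/eqP => /(congr1 (@nat_of_ord n)) /=; lia.
have zr2 : z != r2 by apply/eqP => /(congr1 (@nat_of_ord n)); rewrite r2v /=; lia.
have r12 : i0 != r2 by apply/eqP => /(congr1 (@nat_of_ord n)); rewrite r2v /=; lia.
pose q := (tperm z i0 * tperm z r2)%g.
pose cP : {perm 'I_n} := perm (@ord_pred_inj n).
exists (q * cP)%g.
have Hq : forall i, ordS ((q * cP)%g i) = q i by move=> i; rewrite permM permE ord_predK.
have qz : q z = i0 by rewrite permM tpermL tpermD // eq_sym.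
have q1 : q i0 = r2 by rewrite permM tpermR tpermL.
have q2 : q r2 = z by rewrite permM (tpermD zr2 r12) tpermR.
have qo : forall i, i != z -> i != i0 -> i != r2 -> q i = i.
  move=> i iz i1 i2; rewrite permM tpermD 1?eq_sym // tpermD // eq_sym //.
have s1 : (q * cP)%g i0 = j0 by apply: ordS_inj; rewrite Hq q1.
have nzall : forall i, @Amx _ n var_s var_t S i ((q * cP)%g i) != 0.
  move=> i; apply: (A_nz HS).
  case: (eqVneq i z) => [->|iz]; first by rewrite Hq qz /=; lia.
  case: (eqVneq i i0) => [->|i1]; first by rewrite s1 Hin !orbT.
  case: (eqVneq i r2) => [->|i2]; first by rewrite Hq q2 r2v /=; lia.
  rewrite Hq qo // eqxx /=.
  by move: iz; rewrite -val_eqE /= => ->.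
apply/andP; split; first by apply/forallP.
have -> : #|[pred i | @Amx _ n var_s var_t S i ((q * cP)%g i) == var_t]| =
          #|[set z; i0; r2]|.
  apply: eq_card => i; rewrite inE /= (keyT HS (nzall i)) permM cSE Hq !inE.
  case: (eqVneq i z) => [->|iz]; first by rewrite qz eq_sym zr1.
  case: (eqVneq i i0) => [->|i1]; first by rewrite q1 eq_sym r12 orbT.
  case: (eqVneq i r2) => [->|i2]; first by rewrite q2 zr2 !orbT.
  by rewrite qo // eqxx.
rewrite setUC cardsU1 cards2 !inE zr1 negb_or.
by rewrite (eq_sym r2 z) zr2 (eq_sym r2 i0) r12.
Qed.

Theorem proposition5p7 (n : nat) (S : {set 'I_n * 'I_n}) :
  (3 <= n)%N ->
  S != set0 ->
  (forall p, p \in S -> [/\ (1 <= p.1)%N, (p.1 <= p.2)%N & (p.2 <= n - 2)%N]) ->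
  ((\det (@Amx _ n var_s var_t S))`_3)`_(n - 3) != 0.
Proof.
move=> n3 Sne HS.
rewrite /determinant !coef_sum.
rewrite (eq_bigr (fun s : 'S_n => if goodP S s then (-1) ^+ cS n else 0)); last first.
  move=> s _.
  have -> : (((-1) ^+ s * \prod_i @Amx _ n var_s var_t S i (s i))`_3)`_(n-3) =
     (-1) ^+ s * ((\prod_i @Amx _ n var_s var_t S i (s i))`_3)`_(n-3).
    by case: (odd_perm s); rewrite ?expr1 ?expr0 ?mulN1r ?mul1r ?coefN.
  rewrite (prod_coef n3 (fun i => A_cases S i (s i))) -/(goodP S s).
  case: (boolP (goodP S s)) => G; last by rewrite mulr0.
  by rewrite mulr1 (good_sign HS n3 G).
rewrite -big_mkcond /= sumr_const.
rewrite mulrn_eq0 negb_or signr_eq0 andbT -lt0n.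
apply/card_gt0P; case: (exists_good HS n3 Sne) => s Gs; by exists s.
Qed.
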